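(* Let $M\subset\mathbb{C}$ be a bounded domain, $\omega$ a finite positive Borel measure with compact support, $h$ harmonic on $M$, and $\lambda=e^{-2(p(\omega)+h)}$. If $z_0\in M$ satisfies $\omega(\{z_0\})\ge2\pi$, then every broken line $K\subset M$ having $z_0$ as an extremity satisfies $\tilde s_\lambda(K)=+\infty$; consequently $\rho_\lambda(z_0,z)=+\infty$ for every $z\in M\setminus\{z_0\}$, i.e. $z_0$ is a point at infinity of $\rho_\lambda$.
   Context: $p(z;\omega)=\frac1{2\pi}\iint\ln|z-\zeta|\,d\omega(\zeta)$. For a rectifiable arc $K$ with Euclidean length $s(K)$ and parameterization proportional to arc length $z:[0,1]\to\mathbb{C}$, $\tilde s_\lambda(K)=s(K)\int_0^1\lambda^{1/2}(z(t))\,dt$. $\rho_\lambda(a,b)$ is the infimum of $\tilde s_\lambda(L)$ over broken lines $L\subset M$ joining $a$ and $b$ (infimum of the empty set being $+\infty$). *)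

(* Defs.v *)
(* The complex plane C is modelled as R * R
   (real part, imaginary part) over an arbitrary R : realType. *)
From HB Require Import structures.
From mathcomp Require Import all_boot all_order all_algebra.
From mathcomp Require Import all_classical all_reals all_analysis.
Set Implicit Arguments. Unset Strict Implicit. Unset Printing Implicit Defensive.
Import Order.TTheory GRing.Theory Num.Theory.
Import numFieldNormedType.Exports.
Local Open Scope classical_set_scope.
Local Open Scope ring_scope.

Section Defs.
Context {R : realType}.
Local Notation C := (R * R)%type.

Definition cdist (z w : C) : R :=
  Num.sqrt ((z.1 - w.1) ^+ 2 + (z.2 - w.2) ^+ 2).

Definition lnabs (z w : C) : \bar R :=
  if cdist z w == 0 then -oo%E else (ln (cdist z w))%:E.

Definition msupp (om : set C -> \bar R) : set C :=
  [set z | forall U : set C, open U -> U z -> (0 < om U)%E].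

Definition logpot (om : {measure set C -> \bar R}) (z : C) : \bar R :=
  ((2 * pi)^-1)%:E * (\int[om]_(zeta in [set: C]) lnabs z zeta)%E.

Definition lam (om : {measure set C -> \bar R}) (h : C -> R) (z : C) : \bar R :=
  expeR (- (2%:E * (logpot om z + (h z)%:E)))%E.

Definition dx (f : C -> R) (z : C) : R := derive1 (fun t => f (t, z.2)) z.1.
Definition dy (f : C -> R) (z : C) : R := derive1 (fun t => f (z.1, t)) z.2.
Definition dxable (f : C -> R) (z : C) := derivable (fun t => f (t, z.2)) z.1 1.
Definition dyable (f : C -> R) (z : C) := derivable (fun t => f (z.1, t)) z.2 1.

Definition harmonic_on (M : set C) (h : C -> R) : Prop :=
  forall z, M z ->
    (dxable h z /\ dyable h z /\
     dxable (dx h) z /\ dyable (dx h) z /\ dxable (dy h) z /\ dyable (dy h) z) /\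
    ({for z, continuous h} /\ {for z, continuous (dx h)} /\
     {for z, continuous (dy h)} /\ {for z, continuous (dx (dx h))} /\
     {for z, continuous (dy (dx h))} /\ {for z, continuous (dx (dy h))} /\
     {for z, continuous (dy (dy h))}) /\
    dx (dx h) z + dy (dy h) z = 0.

Definition bounded_domain (M : set C) : Prop :=
  [/\ M !=set0, open M, connected M & bounded_set M].

Definition segment (a b : C) : set C :=
  [set a + t *: (b - a) | t in `[0%R, 1%R]%classic].

(* broken line given by its vertices a_0, ..., a_n (n >= 1), consecutive
   vertices distinct *)
Fixpoint consec_distinct (s : seq C) : Prop :=
  match s with
  | a :: ((b :: _) as s') => a <> b /\ consec_distinct s'
  | _ => True
  end.

Definition broken_line (s : seq C) : Prop := (1 < size s)%N /\ consec_distinct s.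

Fixpoint bl_in (M : set C) (s : seq C) : Prop :=
  match s with
  | a :: ((b :: _) as s') => segment a b `<=` M /\ bl_in M s'
  | _ => True
  end.

Fixpoint bl_length (s : seq C) : R :=
  match s with
  | a :: ((b :: _) as s') => cdist a b + bl_length s'
  | _ => 0
  end.

Fixpoint arcpt (s : seq C) (u : R) : C :=
  match s with
  | [::] => 0
  | [:: a] => a
  | a :: ((b :: _) as s') =>
      if u <= cdist a b then a + (u / cdist a b) *: (b - a)
      else arcpt s' (u - cdist a b)
  end.

Definition bl_param (s : seq C) (t : R) : C := arcpt s (t * bl_length s).

Definition stilde (lm : C -> \bar R) (s : seq C) : \bar R :=
  ((bl_length s)%:E *
   \int[lebesgue_measure]_(t in `[0%R, 1%R]%classic) poweR (lm (bl_param s t)) (2^-1))%E.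

(* rho_lambda(a, b) = inf of tilde s_lambda(L) over broken lines L in M
   joining a and b (inf of the empty set = +oo) *)
Definition rho (M : set C) (lm : C -> \bar R) (a b : C) : \bar R :=
  ereal_inf [set stilde lm s | s in
    [set s | broken_line s /\ bl_in M s /\ head 0 s = a /\ last 0 s = b]].

End Defs.

(* Main.v *)
Require Import Defs.
From HB Require Import structures.
From mathcomp Require Import all_boot all_order all_algebra.
From mathcomp Require Import all_classical all_reals all_analysis.
From mathcomp Require Import lra ring.
From mathcomp Require Import measurable_realfun.
Import Order.TTheory GRing.Theory Num.Theory.
Import numFieldNormedType.Exports.
Local Open Scope classical_set_scope.
Local Open Scope ring_scope.
Import HBNNSimple.


Section Gen.
Context d (T : measurableType d) (R : realType).
Variable mu : {measure set T -> \bar R}.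

Lemma le_integral_nm (D : set T) (f g : T -> \bar R) :
  (forall x, D x -> (0 <= f x)%E) -> (forall x, D x -> (f x <= g x)%E) ->
  (\int[mu]_(x in D) f x <= \int[mu]_(x in D) g x)%E.
Proof.
move=> f0 fg.
have g0 : forall x, D x -> (0 <= g x)%E.
  by move=> x Dx; exact: le_trans (f0 x Dx) (fg x Dx).
rewrite (ge0_integralE _ f0) (ge0_integralE _ g0).
apply: ereal_sup_le => _ [h hf <-]; exists h => //= x.
apply: (le_trans (hf x)); rewrite /patch; case: ifP => // /set_mem Dx; exact: fg.
Qed.

Lemma le_integral_ae_nm (f : T -> \bar R) (c : R) (N : set T) :
  (forall x, (0 <= f x)%E) -> 0 <= c -> measurable N -> mu N = 0%E ->
  (forall x, ~ N x -> (f x <= c%:E)%E) ->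
  (\int[mu]_(x in setT) f x <= c%:E * mu setT)%E.
Proof.
move=> f0 c0 mN muN fc.
rewrite (ge0_integralTE _ f0).
apply: ge_ereal_sup => _ [h hf <-] /=.
rewrite -integral_cst //.
have -> : sintegral mu h = (\int[mu]_(x in setT) (h x)%:E)%E.
  by rewrite integral_nnsfun // patch_setT.
apply: ae_ge0_le_integral => //; first by move=> x _; rewrite lee_fin.
  by apply/measurable_EFinP; exact: measurable_funPT.
exists N; split => // x /= nx; apply: contra_notP nx => nx _.
exact: le_trans (hf x) (fc x nx).
Qed.

End Gen.


Section Rect.
Context (R : realType).
Local Notation C := (R * R)%type.
Definition rect (q : rat * rat * rat * rat) : set C :=
  [set` `]ratr q.1.1.1, ratr q.1.1.2[%R] `*` [set` `]ratr q.1.2, ratr q.2[%R].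

Lemma rect_measurable q : measurable (rect q).
Proof. by apply: measurableX; exact: measurable_itv. Qed.

Lemma rat_around (x e : R) : 0 < e ->
  exists a b : rat, [/\ x - e < ratr a, ratr a < x, x < ratr b & ratr b < x + e].
Proof.
move=> e0.
have h1 : x - e < x by rewrite ltrBlDr ltrDl.
have h2 : x < x + e by rewrite ltrDl.
have [a] := rat_in_itvoo h1; rewrite in_itv /= => /andP[? ?].
have [b] := rat_in_itvoo h2; rewrite in_itv /= => /andP[? ?].
by exists a, b.
Qed.

Lemma rect_dense (U : set C) (p : C) : open U -> U p ->
  exists q, rect q p /\ rect q `<=` U.
Proof.
move=> oU Up.
have : nbhs p U by exact: open_nbhs_nbhs.
move=> /nbhs_ballP [e /= e0 eU].
have [a1 [b1 [? ? ? ?]]] := @rat_around p.1 e e0.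
have [a2 [b2 [? ? ? ?]]] := @rat_around p.2 e e0.
exists (a1, b1, a2, b2); split.
  by split; rewrite /= in_itv /=; apply/andP.
move=> z [/=]; rewrite !in_itv /= => /andP[? ?] /andP[? ?].
apply: eU; rewrite ball_prod_normE /ball_ /= prod_normE /= gt_max.
apply/andP; split; rewrite ltr_norml; apply/andP; split; rewrite ?opprB; lra.
Qed.

Definition qsel (P : set C -> Prop) (n : nat) : set C :=
  if unpickle n is Some q then (if pselect (P (rect q)) then rect q else set0)
  else set0.

Lemma qsel_measurable P n : measurable (qsel P n).
Proof.
rewrite /qsel; case: (unpickle n) => [q|]; last exact: measurable0.
by case: (pselect (_ (rect q))) => HH; [exact: rect_measurable|exact: measurable0].
Qed.

Lemma open_measurable2 (U : set C) : open U -> measurable U.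
Proof.
move=> oU.
have -> : U = \bigcup_n qsel (fun A => A `<=` U) n.
  apply/seteqP; split => [p Up|p [n _]].
    have [q [qp qU]] := @rect_dense U p oU Up.
    exists (pickle q); first by [].
    rewrite /qsel pickleK; case: (pselect (rect q `<=` U)) => [H|H].
      exact: qp.
    exact: (H qU).
  rewrite /qsel; case: (unpickle n) => [q|]; last by [].
  case: (pselect (rect q `<=` U)) => [H|H]; last by [].
  exact: H.
by apply: bigcupT_measurable => n; exact: qsel_measurable.
Qed.


Lemma msupp_negligible (mu : {measure set C -> \bar R}) :
  mu.-negligible (~` msupp mu).
Proof.
set N := \bigcup_n qsel (fun A => mu A = 0%E) n.
have mN : measurable N.
  by apply: bigcupT_measurable => n; exact: qsel_measurable.
exists N; split; first exact: mN.
- have : mu.-negligible N.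
    apply: negligible_bigcup => n; exists (qsel (fun A => mu A = 0%E) n).
    split; [exact: qsel_measurable| |by []].
    rewrite /qsel; case: (unpickle n) => [q|]; last exact: measure0.
    case: (pselect (mu (rect q) = 0%E)) => [H|H]; first exact: H.
    exact: measure0.
  case=> A [mA muA sA]; apply/eqP; rewrite eq_le measure_ge0 andbT -muA.
  by apply: le_measure; rewrite ?inE.
- move=> p /= /existsNP [U] /not_implyP [oU] /not_implyP [Up] nU.
  have mU0 : mu U = 0%E.
    by apply/eqP; rewrite eq_le measure_ge0 andbT leNgt; apply/negP.
  have [q [qp qU]] := @rect_dense U p oU Up.
  exists (pickle q); first by [].
  rewrite /qsel pickleK; case: (pselect (mu (rect q) = 0%E)) => [H|nq].
    exact: qp.
  exfalso; apply: nq; apply/eqP; rewrite eq_le measure_ge0 andbT -mU0.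
  apply: le_measure; rewrite ?inE; [exact: rect_measurable| |exact: qU].
  exact: open_measurable2.
Qed.
End Rect.


Section Geo.
Context (R : realType).
Local Notation C := (R * R)%type.

Lemma cdist_ge0 (z w : C) : 0 <= cdist z w.
Proof. exact: sqrtr_ge0. Qed.

Lemma cdist_sym (z w : C) : cdist z w = cdist w z.
Proof. by rewrite /cdist; congr Num.sqrt; ring. Qed.

Lemma cdist_eq0 (z w : C) : cdist z w = 0 -> z = w.
Proof.
rewrite /cdist => /eqP; rewrite sqrtr_eq0 => H.
have s1 := sqr_ge0 (z.1 - w.1); have s2 := sqr_ge0 (z.2 - w.2).
have : (z.1 - w.1) ^+ 2 + (z.2 - w.2) ^+ 2 == 0.
  by rewrite eq_le H addr_ge0.
rewrite paddr_eq0 // !sqrf_eq0 !subr_eq0 => /andP[/eqP h1 /eqP h2].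
by case: z w h1 h2 {H s1 s2} => [z1 z2] [w1 w2] /= -> ->.
Qed.

Lemma cdist_c1 (z w : C) : `|z.1 - w.1| <= cdist z w.
Proof.
rewrite -sqrtr_sqr /cdist ler_sqrt.
  by rewrite lerDl sqr_ge0.
by apply: addr_ge0; apply: sqr_ge0.
Qed.

Lemma cdist_c2 (z w : C) : `|z.2 - w.2| <= cdist z w.
Proof.
rewrite -sqrtr_sqr /cdist ler_sqrt.
  by rewrite lerDr sqr_ge0.
by apply: addr_ge0; apply: sqr_ge0.
Qed.

Lemma cdist_le (z w : C) : cdist z w <= `|z.1 - w.1| + `|z.2 - w.2|.
Proof.
have n1 := normr_ge0 (z.1 - w.1); have n2 := normr_ge0 (z.2 - w.2).
rewrite -[X in _ <= X]ger0_norm; last by apply: addr_ge0.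
rewrite -sqrtr_sqr /cdist ler_sqrt; last exact: sqr_ge0.
rewrite -(real_normK (num_real (z.1 - w.1))) -(real_normK (num_real (z.2 - w.2))).
move: n1 n2; set a := `|_ - _|; set b := `|_ - _|; move=> n1 n2.
have := mulr_ge0 n1 n2; rewrite sqrrD mulr2n; lra.
Qed.

Lemma cdist_lerp_a (a b : C) (k : R) : 0 <= k ->
  cdist (a + k *: (b - a)) a = k * cdist a b.
Proof.
move=> k0; rewrite /cdist /=.
have -> : (a.1 + k * (b.1 - a.1) - a.1) ^+ 2 + (a.2 + k * (b.2 - a.2) - a.2) ^+ 2
  = k ^+ 2 * ((a.1 - b.1) ^+ 2 + (a.2 - b.2) ^+ 2) by ring.
by rewrite sqrtrM ?sqr_ge0 // sqrtr_sqr ger0_norm.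
Qed.

Lemma cdist_lerp_b (a b : C) (k : R) : k <= 1 ->
  cdist (a + k *: (b - a)) b = (1 - k) * cdist a b.
Proof.
move=> k1; rewrite /cdist /=.
have -> : (a.1 + k * (b.1 - a.1) - b.1) ^+ 2 + (a.2 + k * (b.2 - a.2) - b.2) ^+ 2
  = (1 - k) ^+ 2 * ((a.1 - b.1) ^+ 2 + (a.2 - b.2) ^+ 2) by ring.
by rewrite sqrtrM ?sqr_ge0 // sqrtr_sqr ger0_norm // subr_ge0.
Qed.


Lemma cdist_gt0 (a b : C) : a <> b -> 0 < cdist a b.
Proof.
move=> ab; rewrite lt_neqAle cdist_ge0 andbT; apply/eqP => H.
by apply: ab; apply: cdist_eq0.
Qed.

Lemma bl_length_ge0 (s : seq C) : 0 <= bl_length s.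
Proof.
elim: s => [|a s IH] //; case: s IH => [|b s] IH //.
by rewrite [bl_length _]/= addr_ge0 // cdist_ge0.
Qed.

Lemma bl_length_gt0 (s : seq C) : broken_line s -> 0 < bl_length s.
Proof.
case: s => [|a [|b s]] [] // _ [ab _].
have -> : bl_length [:: a, b & s] = cdist a b + bl_length (b :: s) by [].
by apply: ltr_wpDr; [exact: bl_length_ge0|exact: cdist_gt0].
Qed.

Lemma arc_head (a b : C) (s : seq C) (u : R) : u <= cdist a b ->
  arcpt (a :: b :: s) u = a + (u / cdist a b) *: (b - a).
Proof. by move=> H; rewrite [arcpt _ _]/= H. Qed.

Lemma arc_tail (a b : C) (s : seq C) (u : R) : cdist a b < u ->
  arcpt (a :: b :: s) u = arcpt (b :: s) (u - cdist a b).
Proof. by move=> H; rewrite {1}/arcpt -/arcpt ifF //; apply/negbTE; rewrite -ltNge. Qed.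

Lemma arc_last (s : seq C) : consec_distinct s -> (1 < size s)%N ->
  exists dl, [/\ 0 < dl, dl <= bl_length s &
    forall v, 0 <= v -> v < dl -> cdist (arcpt s (bl_length s - v)) (last 0 s) = v].
Proof.
elim: s => [|a s IH] //; case: s IH => [|b s] IH //.
case: s IH => [|c s] IH.
  move=> [ab _] _; exists (cdist a b); split.
  - exact: (@cdist_gt0 a b ab).
  - by rewrite [bl_length _]/= addr0.
  move=> v v0 vd.
  have d0 := @cdist_gt0 a b ab.
  rewrite [bl_length _]/= addr0 arc_head; last by lra.
  rewrite [last _ _]/= cdist_lerp_b; last first.
    by rewrite ler_pdivrMr // mul1r; lra.
  by field; rewrite gt_eqF.
move=> [ab cd] _.
have [dl [dl0 dlL H]] := IH cd isT.
have -> : bl_length [:: a, b, c & s] = cdist a b + bl_length [:: b, c & s] by [].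
exists dl; split => //.
  by have := cdist_ge0 a b; lra.
move=> v v0 vd.
rewrite arc_tail; last by lra.
have -> : cdist a b + bl_length [:: b, c & s] - v - cdist a b =
  bl_length [:: b, c & s] - v by ring.
exact: H.
Qed.
End Geo.



Section Div.
Context (R : realType).

Lemma geom_bound (dl : R) n : forall u : R, 0 < u ->
  u * (\sum_(k < n) 2 ^+ k * (((u * 2 ^+ k <= dl)%R)%:R)) <=
  (if u <= dl then 2 * dl - u else 0).
Proof.
elim: n => [|n IH] u u0.
  rewrite big_ord0 mulr0; case: ifP => // H; lra.
rewrite big_ord_recl /= expr0 mul1r mulr1.
have -> : \sum_(i < n) 2 ^+ (bump 0 i) * (((u * 2 ^+ (bump 0 i) <= dl)%R)%:R : R)
  = 2 * \sum_(i < n) 2 ^+ i * ((((2 * u) * 2 ^+ i <= dl)%R)%:R : R).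
  rewrite mulr_sumr; apply: eq_bigr => i _.
  by rewrite /bump /= add1n exprS mulrA [u * 2]mulrC -mulrA.
have := IH (2 * u); rewrite mulr_gt0 // => /(_ isT).
rewrite mulrDr mulrA [u * 2]mulrC.
move: (\sum_(i < n) _) => S.
case: (lerP u dl) => H1; case: ifP => H2 /=; lra.
Qed.


Local Notation I01 := (`[0%R, 1%R]%classic : set R).

Lemma int_div (F : R -> \bar R) (c dl : R) (A : nat -> set R) (u : R -> R) :
  0 < c -> 0 < dl ->
  (forall t, (0 <= F t)%E) ->
  (forall k, measurable (A k)) ->
  (forall k, lebesgue_measure (A k `&` I01) = (dl / 2 ^+ k)%:E) ->
  (forall k t, I01 t -> (A k t <-> (0 < u t /\ u t * 2 ^+ k <= dl))) ->
  (forall t, I01 t -> 0 < u t -> u t <= dl -> ((c / u t)%:E <= F t)%E) ->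
  (\int[lebesgue_measure]_(t in I01) F t)%E = +oo%E.
Proof.
move=> c0 dl0 F0 mA muA Au Fb.
have mI : measurable I01 by exact: measurable_itv.
apply/eqyP => B B0.
set n := (Num.Def.truncn (2 * B / c)).+1.
have nB : B <= n%:R * (c / 2).
  have := truncnS_gt (2 * B / c); rewrite -/n => H.
  rewrite -ler_pdivrMr; last by lra.
  apply: ltW; apply: le_lt_trans H; rewrite le_eqVlt; apply/orP; left.
  by apply/eqP; field; lra.
set a := fun k : nat => c / (2 * dl) * 2 ^+ k.
set g := fun t => (\sum_(k < n) (a k * \1_(A k) t)%:E)%E.
apply: (le_trans _ (@le_integral_nm _ _ _ lebesgue_measure I01 g F _ _)).
- rewrite /g ge0_integral_sum //; last first.
  + move=> k t _; rewrite lee_fin mulr_ge0 // /a ?indicE //.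
      by rewrite mulr_ge0 // ?exprn_ge0 // divr_ge0 //; lra.
  + move=> k; apply/measurable_EFinP.
    apply: measurable_funM; first exact: measurable_cst.
    apply: measurable_indic; exact: (mA k).
  have -> : (\sum_(k < n) \int[lebesgue_measure]_(x in I01) (a k * \1_(A k) x)%:E)%E
          = (\sum_(k < n) (c / 2)%:E)%E.
    apply: eq_bigr => k _.
    under eq_integral do rewrite EFinM.
    rewrite ge0_integralZl_EFin //; try (by move=> t _; rewrite lee_fin indicE);
      try (by rewrite /a mulr_ge0 // ?exprn_ge0 // divr_ge0 //; lra);
      try (by apply/measurable_EFinP; apply: measurable_indic; exact: (mA k)).
    rewrite integral_indic //; last exact: (mA k).
    rewrite (_ : lebesgue_measure_lebesgue_measure__canonical__measure_function_Measure R (A k `&` `[0%R, 1%R]) = (dl / 2 ^+ k)%:E); last exact: muA k.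
    rewrite -EFinM /a; congr EFin.
    have : (2 : R) ^+ k != 0 by rewrite expf_neq0.
    move=> H; field; apply/andP; split => //; lra.
  rewrite sumr_const card_ord.
  have -> : ((c / 2)%:E *+ n)%R = ((c / 2) *+ n)%:E by rewrite EFin_natmul.
  by rewrite lee_fin -mulr_natl.
- by move=> t _; rewrite /g sumEFin lee_fin; apply: sumr_ge0 => k _;
    rewrite mulr_ge0 // /a ?indicE // mulr_ge0 // ?exprn_ge0 // divr_ge0 //; lra.
- move=> t It; rewrite /g sumEFin.
  have ind k : \1_(A k) t = (((0 < u t) && (u t * 2 ^+ k <= dl))%R)%:R :> R.
    have e : (t \in A k) = ((0 < u t) && (u t * 2 ^+ k <= dl))%R.
      apply/idP/idP => [/set_mem /(Au k t It) [H1 H2]|/andP[H1 H2]].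
        by rewrite H1 H2.
      by apply/mem_set; apply/(Au k t It).
    by rewrite indicE e.
  case: (ltrP 0 (u t)) => ut; last first.
    have -> : \sum_(k < n) a k * \1_(A k) t = 0.
      by apply: big1 => k _; rewrite ind ltNge ut /= mulr0.
    exact: F0.
  case: (lerP (u t) dl) => udl; last first.
    have -> : \sum_(k < n) a k * \1_(A k) t = 0.
      apply: big1 => k _; rewrite ind ut /=.
      have : dl < u t * 2 ^+ k.
        apply: (lt_le_trans udl).
        have h2 : (1 : R) <= 2 ^+ k by apply: exprn_ege1; lra.
        have h3 := ltW ut; nra.
      by rewrite ltNge => /negbTE ->; rewrite mulr0.
    exact: F0.
  apply: le_trans (Fb t It ut udl); rewrite lee_fin.
  have -> : \sum_(k < n) a k * \1_(A k) t =
    c / (2 * dl) * \sum_(k < n) 2 ^+ k * (((u t * 2 ^+ k <= dl)%R)%:R).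
    rewrite mulr_sumr; apply: eq_bigr => k _; rewrite ind ut /= /a mulrA //.
  have := @geom_bound dl n (u t) ut; rewrite udl => H.
  move: H; set S := \sum_(k < n) _ => H.
  rewrite ler_pdivlMr //.
  have -> : c / (2 * dl) * S * u t = c / (2 * dl) * (u t * S) by ring.
  apply: (@le_trans _ _ (c / (2 * dl) * (2 * dl))).
    apply: ler_wpM2l; first by rewrite divr_ge0 //; lra.
    lra.
  by rewrite divfK //; lra.
Qed.
End Div.



Section Est.
Context (R : realType).
Local Notation C := (R * R)%type.

Lemma set1_measurable (z0 : C) : measurable [set z0].
Proof.
have -> : [set z0] = [set z0.1] `*` [set z0.2].
  apply/seteqP; split => [z /= ->|[z1 z2] /= [/= -> ->]] //.
  by case: z0.
by apply: measurableX; exact: measurable_set1.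
Qed.

Lemma lnabs_pos_bound (z w : C) (D : R) : 1 <= D -> cdist z w <= D ->
  ((lnabs z)^\+ w <= (ln D)%:E)%E.
Proof.
move=> D1 zw.
have lnD : 0 <= ln D by apply: ln_ge0.
rewrite funeposE ge_max lee_fin lnD andbT /lnabs.
case: ifP => [_|/negbT H]; first by rewrite leNye.
have c0 : 0 < cdist z w by rewrite lt_neqAle eq_sym H cdist_ge0.
rewrite lee_fin ler_ln ?posrE //; lra.
Qed.


Lemma logpot_bound (om : {finite_measure set C -> \bar R}) (z0 z : C) (D : R)
    (N : set C) :
  1 <= D -> measurable N -> om N = 0%E -> (forall w, ~ N w -> cdist z w <= D) ->
  ((2 * pi)%:E <= om [set z0])%E -> 0 < cdist z z0 -> cdist z z0 <= 1 ->
  (logpot om z <= ((ln D * fine (om setT)) / (2 * pi) + ln (cdist z z0))%:E)%E.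
Proof.
move=> D1 mN omN hD hm r0 r1.
set r := cdist z z0.
have pi0 : 0 < pi :> R by exact: pi_gt0.
have fT : om setT = (fine (om setT))%:E by rewrite fineK // fin_num_measure.
have f1 : om [set z0] = (fine (om [set z0]))%:E.
  by rewrite fineK // fin_num_measure //; exact: set1_measurable.
set T0 := fine (om setT) in fT *; set m := fine (om [set z0]) in f1 *.
have T00 : 0 <= T0 by rewrite -lee_fin -fT measure_ge0.
have m2 : 2 * pi <= m by rewrite -lee_fin -f1.
have lnD : 0 <= ln D by apply: ln_ge0.
have lnr : ln r <= 0 by apply: ln_le0.
rewrite /logpot integralE.
have h1 : (\int[om]_(x in [set: C]) (lnabs z)^\+ x <= (ln D * T0)%:E)%E.
  rewrite EFinM -fT.
  apply: (@le_integral_ae_nm _ _ _ om _ _ N) => //.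
  by move=> w nw; apply: lnabs_pos_bound => //; exact: hD.
have h2 : ((- ln r * m)%:E <= \int[om]_(x in [set: C]) (lnabs z)^\- x)%E.
  apply: (@le_trans _ _ (\int[om]_(x in [set: C]) ((- ln r) * \1_[set z0] x)%:E)%E).
    under eq_integral do rewrite EFinM.
    rewrite ge0_integralZl_EFin //; try (by rewrite oppr_ge0);
      try (by apply/measurable_EFinP; apply: measurable_indic; exact: set1_measurable);
      try (by move=> x _; rewrite lee_fin indicE).
    rewrite integral_indic //; last exact: set1_measurable.
    rewrite setIT EFinM le_eqVlt; apply/orP; left; apply/eqP.
    congr (_ * _)%E; exact: (esym f1).
  apply: le_integral_nm => x _.
    by rewrite lee_fin indicE mulr_ge0 // oppr_ge0.
  rewrite funenegE indicE; case: (boolP (x \in [set z0])) => [/set_mem ->|_].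
    rewrite mulr1 le_max; apply/orP; left.
    by rewrite /lnabs -/r ifF ?gt_eqF //.
  by rewrite mulr0 le_max lexx orbT.
apply: (@le_trans _ _ (((2 * pi)^-1)%:E * (ln D * T0 - (- ln r * m))%:E)%E).
  apply: lee_wpmul2l; first by change ((0:R)%:E <= ((2 * pi)^-1)%:E)%E; rewrite lee_fin invr_ge0 mulr_ge0 // (ltW pi0).
  rewrite EFinB; exact: leeB.
rewrite -EFinM lee_fin.
have : ln r * m <= ln r * (2 * pi) by rewrite ler_wnM2l.
have -> : ln D * T0 / (2 * pi) + ln r = (2 * pi)^-1 * (ln D * T0 + ln r * (2 * pi)).
  by field; lra.
move=> H; apply: ler_wpM2l; first by rewrite invr_ge0 mulr_ge0 // (ltW pi0).
lra.
Qed.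

Lemma lam_bound (om : {finite_measure set C -> \bar R}) (h : C -> R) (z0 z : C)
    (D : R) (N : set C) (H : R) :
  1 <= D -> measurable N -> om N = 0%E -> (forall w, ~ N w -> cdist z w <= D) ->
  ((2 * pi)%:E <= om [set z0])%E -> 0 < cdist z z0 -> cdist z z0 <= 1 ->
  h z <= H ->
  (((expR (- (ln D * fine (om setT) / (2 * pi) + H))) / cdist z z0)%:E
     <= poweR (lam om h z) 2^-1)%E.
Proof.
move=> D1 mN omN hD hm r0 r1 hH.
have P := @logpot_bound om z0 z D N D1 mN omN hD hm r0 r1.
set X0 := ln D * fine (om setT) / (2 * pi) in P *.
set r := cdist z z0 in P r0 r1 *.
set Y := X0 + ln r + H.
have PY : (logpot om z + (h z)%:E <= Y%:E)%E.
  by rewrite /Y EFinD; apply: leeD => //; rewrite lee_fin.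
have L1 : ((expR (- (2 * Y)))%:E <= lam om h z)%E.
  rewrite /lam.
  have -> : (expR (- (2 * Y)))%:E = expeR (- (2%:E * Y%:E))%E by [].
  rewrite lee_expeR leeN2; apply: lee_wpmul2l => //.
rewrite poweR12_sqrt ?expeR_ge0 //.
apply: (@le_trans _ _ (sqrte (expR (- (2 * Y)))%:E)); last first.
  by rewrite lee_sqrt ?expeR_ge0.
have -> : sqrte (expR (- (2 * Y)))%:E = (Num.sqrt (expR (- (2 * Y))))%:E by [].
rewrite lee_fin.
have -> : expR (- (2 * Y)) = expR (- Y) ^+ 2.
  by rewrite -expRM_natl; congr expR; rewrite mulrN.
rewrite sqrtr_sqr ger0_norm ?expR_ge0 //.
have -> : - Y = - (X0 + H) + - ln r by rewrite /Y; ring.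
by rewrite expRD (expRN (ln r)) (@lnK _ r) ?posrE.
Qed.
End Est.



Section Fin.
Context (R : realType).
Local Notation C := (R * R)%type.

Lemma leb_oc (a : R) : 0 < a -> a <= 1 ->
  lebesgue_measure ([set` `]0, a]] `&` (`[0%R, 1%R]%classic : set R)) = a%:E.
Proof.
move=> a0 a1; rewrite setIidl.
  by rewrite lebesgue_measure_itv /= lte_fin a0 -EFinD subr0.
by move=> t /=; rewrite !in_itv /= => /andP[? ?]; apply/andP; split; lra.
Qed.

Lemma leb_co (a : R) : 0 < a -> a <= 1 ->
  lebesgue_measure ([set` `[1 - a, 1[] `&` (`[0%R, 1%R]%classic : set R)) = a%:E.
Proof.
move=> a0 a1; rewrite setIidl.
  rewrite lebesgue_measure_itv /= lte_fin ltrBlDr ltrDl a0.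
  by rewrite -EFinD; congr EFin; ring.
by move=> t /=; rewrite !in_itv /= => /andP[? ?]; apply/andP; split; lra.
Qed.

Lemma h_cont (h : C -> R) (z0 : C) : {for z0, continuous h} ->
  exists e : R, 0 < e /\ forall z, cdist z z0 < e -> h z <= h z0 + 1.
Proof.
move=> hc.
have : nbhs z0 (h @^-1` ball (h z0) 1).
  by apply: hc; apply: nbhsx_ballx.
move=> /nbhs_ballP [e /= e0 he]; exists e; split => // z zz.
have : ball (h z0) 1 (h z).
  apply: he; rewrite ball_prod_normE /ball_ /= prod_normE /= gt_max.
  rewrite cdist_sym in zz.
  apply/andP; split; apply: le_lt_trans zz; [exact: cdist_c1|exact: cdist_c2].
rewrite /ball /= => H.
have := ler_norm (h z0 - h z); rewrite distrC in H.
move: H; rewrite ltr_norml => /andP[? ?]; lra.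
Qed.


Lemma key_bound (om : {finite_measure set C -> \bar R}) (h : C -> R) (z0 : C) :
  compact (msupp om) -> {for z0, continuous h} ->
  ((2 * pi)%:E <= om [set z0])%E ->
  exists r0 c : R, [/\ 0 < r0, 0 < c & forall z, 0 < cdist z z0 -> cdist z z0 <= r0 ->
    ((c / cdist z z0)%:E <= poweR (lam om h z) 2^-1)%E].
Proof.
move=> cK hc hm.
have [N [mN omN sN]] := @msupp_negligible R om.
case: (compact_bounded cK) => M0 [_ HM].
have hM0 : forall w, msupp om w -> `|w| <= M0 + 1.
  by apply: HM; rewrite ltrDl.
set Mb := Num.max (M0 + 1) 0.
have Mb0 : 0 <= Mb by rewrite le_max lexx orbT.
have hMb : forall w, msupp om w -> `|w.1| <= Mb /\ `|w.2| <= Mb.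
  move=> w /hM0; rewrite prod_normE ge_max => /andP[h1 h2].
  by split; rewrite le_max; [rewrite h1|rewrite h2].
have [e [e0 he]] := @h_cont h z0 hc.
set D := 2 + `|z0.1| + `|z0.2| + 2 * Mb.
have n1 := normr_ge0 z0.1; have n2 := normr_ge0 z0.2.
have D1 : 1 <= D by rewrite /D; lra.
exists (e / (2 + e)), (expR (- (ln D * fine (om setT) / (2 * pi) + (h z0 + 1)))).
split.
- by apply: divr_gt0; lra.
- exact: expR_gt0.
move=> z r0 rr.
have rr1 : cdist z z0 <= 1.
  by apply: (le_trans rr); rewrite ler_pdivrMr; lra.
have rre : cdist z z0 < e.
  by apply: (le_lt_trans rr); rewrite ltr_pdivrMr; nra.
apply: (@lam_bound _ om h z0 z D N) => //.
- move=> w nw.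
  have sw : msupp om w by apply: contra_notP nw => /sN.
  have [w1 w2] := hMb w sw.
  apply: (le_trans (@cdist_le R z w)).
  have a1 := ler_distD z0.1 z.1 w.1; have a2 := ler_distD z0.2 z.2 w.2.
  have b1 := ler_normB z0.1 w.1; have b2 := ler_normB z0.2 w.2.
  have c1 := @cdist_c1 R z z0; have c2 := @cdist_c2 R z z0.
  rewrite /D; lra.
- exact: he.
Qed.
End Fin.



Section Fin2.
Context (R : realType).
Local Notation C := (R * R)%type.

Lemma int_head (lm : C -> \bar R) (z0 b : C) (s : seq C) (r0 c : R) :
  z0 <> b -> 0 < r0 -> 0 < c ->
  (forall z, 0 < cdist z z0 -> cdist z z0 <= r0 ->
     ((c / cdist z z0)%:E <= poweR (lm z) 2^-1)%E) ->
  (\int[lebesgue_measure]_(t in `[0%R, 1%R]%classic)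
     poweR (lm (bl_param [:: z0, b & s] t)) 2^-1)%E = +oo%E.
Proof.
move=> zb r00 c0 key.
set K := [:: z0, b & s].
set L := bl_length K.
set d := cdist z0 b.
have d0 : 0 < d by exact: (@cdist_gt0 R z0 b zb).
have LE : L = d + bl_length (b :: s) by [].
have L' := @bl_length_ge0 R (b :: s).
have L0 : 0 < L by lra.
set m := d * r0 / (d + r0).
have m0 : 0 < m by apply: divr_gt0; [exact: mulr_gt0|lra].
have md : m <= d by rewrite ler_pdivrMr; nra.
have mr : m <= r0 by rewrite ler_pdivrMr; nra.
set dl := m / L.
have dl0 : 0 < dl by exact: divr_gt0.
have dl1 : dl <= 1 by rewrite ler_pdivrMr // mul1r; lra.
have dlL : dl * L = m by rewrite /dl divfK // gt_eqF.
apply: (@int_div R _ (c / L) dl (fun k => [set` `]0, dl / 2 ^+ k]]) id).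
- exact: divr_gt0.
- exact: dl0.
- by move=> t; exact: poweR_ge0.
- by move=> k; exact: measurable_itv.
- move=> k; apply: leb_oc.
    by apply: divr_gt0 => //; apply: exprn_gt0.
  apply: le_trans dl1; rewrite ler_pdivrMr ?exprn_gt0 //.
  have : (1 : R) <= 2 ^+ k by apply: exprn_ege1; lra.
  nra.
- move=> k t It; rewrite /= in_itv /=; split.
    by move=> /andP[t0 tk]; split => //; rewrite -ler_pdivlMr ?exprn_gt0.
  by move=> [t0 tk]; apply/andP; split => //; rewrite ler_pdivlMr ?exprn_gt0.
- move=> t It t0 tdl.
  have tL : t * L <= m by rewrite -dlL ler_pM2r.
  have pe : bl_param K t = z0 + (t * L / d) *: (b - z0).
    by rewrite /bl_param -/L arc_head // -/d; lra.
  have cd : cdist (bl_param K t) z0 = t * L.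
    rewrite pe cdist_lerp_a; last by apply: divr_ge0; nra.
    by rewrite -/d divfK // gt_eqF.
  have := key (bl_param K t); rewrite cd => /(_ (mulr_gt0 t0 L0)).
  move=> /(_ (le_trans tL mr)).
  have -> : c / (t * L) = c / L / t by field; apply/andP; split; rewrite gt_eqF.
  by [].
Qed.


Lemma int_last (lm : C -> \bar R) (K : seq C) (z0 : C) (r0 c : R) :
  broken_line K -> last 0 K = z0 -> 0 < r0 -> 0 < c ->
  (forall z, 0 < cdist z z0 -> cdist z z0 <= r0 ->
     ((c / cdist z z0)%:E <= poweR (lm z) 2^-1)%E) ->
  (\int[lebesgue_measure]_(t in `[0%R, 1%R]%classic)
     poweR (lm (bl_param K t)) 2^-1)%E = +oo%E.
Proof.
move=> bK lK r00 c0 key.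
have L0 := @bl_length_gt0 R K bK.
case: bK => szK cK.
have [dq [dq0 dqL H]] := @arc_last R K cK szK.
rewrite lK in H.
set L := bl_length K in L0 dqL H *.
set q := dq / 2.
have q0 : 0 < q by rewrite /q; lra.
set m := q * r0 / (q + r0).
have m0 : 0 < m by apply: divr_gt0; [exact: mulr_gt0|lra].
have mq : m <= q by rewrite ler_pdivrMr; nra.
have mr : m <= r0 by rewrite ler_pdivrMr; nra.
set dl := m / L.
have dl0 : 0 < dl by exact: divr_gt0.
have dl1 : dl <= 1 by rewrite ler_pdivrMr // mul1r; rewrite /q in mq; lra.
have dlL : dl * L = m by rewrite /dl divfK // gt_eqF.
apply: (@int_div R _ (c / L) dl (fun k => [set` `[1 - dl / 2 ^+ k, 1[]) (fun t => 1 - t)).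
- exact: divr_gt0.
- exact: dl0.
- by move=> t; exact: poweR_ge0.
- by move=> k; exact: measurable_itv.
- move=> k; apply: leb_co.
    by apply: divr_gt0 => //; apply: exprn_gt0.
  apply: le_trans dl1; rewrite ler_pdivrMr ?exprn_gt0 //.
  have : (1 : R) <= 2 ^+ k by apply: exprn_ege1; lra.
  nra.
- move=> k t It; rewrite /= in_itv /=; split.
    move=> /andP[t0 tk]; split; first lra.
    by rewrite -ler_pdivlMr ?exprn_gt0 //; lra.
  move=> [t0 tk]; apply/andP; split; last lra.
  by move: tk; rewrite -ler_pdivlMr ?exprn_gt0 //; lra.
- move=> t It t0 tdl.
  set v := (1 - t) * L.
  have v0 : 0 < v by exact: mulr_gt0.
  have vm : v <= m by rewrite -dlL ler_pM2r.
  have vq : v < dq by rewrite /q in mq; lra.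
  have pe : bl_param K t = arcpt K (L - v) by rewrite /bl_param -/L /v; congr arcpt; ring.
  have cd : cdist (bl_param K t) z0 = v by rewrite pe; apply: H => //; exact: ltW.
  have := key (bl_param K t); rewrite cd => /(_ v0) /(_ (le_trans vm mr)).
  have -> : c / v = c / L / (1 - t) by rewrite /v; field; apply/andP; split; rewrite gt_eqF.
  by [].
Qed.
End Fin2.

Theorem lemma4p20 (R : realType) (M : set (R * R)%type)
    (om : {finite_measure set (R * R)%type -> \bar R}) (h : (R * R)%type -> R)
    (z0 : (R * R)%type) :
  bounded_domain M ->
  compact (msupp om) ->
  harmonic_on M h ->
  M z0 ->
  ((2 * pi)%:E <= om [set z0])%E ->
  (forall K : seq (R * R)%type,
      broken_line K -> bl_in M K -> (head 0 K = z0 \/ last 0 K = z0) ->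
      stilde (lam om h) K = +oo%E) /\
  (forall z, M z -> z <> z0 -> rho M (lam om h) z0 z = +oo%E).
Proof.
move=> _ cK harm Mz0 hm.
have hc : {for z0, continuous h}.
  by have [_ [[hc _] _]] := harm z0 Mz0.
have [r0 [c [r00 c0 key]]] := @key_bound R om h z0 cK hc hm.
have part1 : forall K : seq (R * R)%type,
    broken_line K -> bl_in M K -> (head 0 K = z0 \/ last 0 K = z0) ->
    stilde (lam om h) K = +oo%E.
  move=> K bK _ hl.
  have L0 := @bl_length_gt0 R K bK.
  rewrite /stilde.
  suff -> : (\int[lebesgue_measure]_(t in `[0%R, 1%R]%classic)
      poweR (lam om h (bl_param K t)) 2^-1)%E = +oo%E.
    by rewrite muleC gt0_mulye // lte_fin.
  case: hl => [hd|lt].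
    case: K bK hd {L0} => [|a [|b s]] [szK cdK] //= hd.
    case: cdK => ab _; rewrite hd in ab *.
    exact: (@int_head R (lam om h) z0 b s r0 c ab r00 c0 key).
  exact: (@int_last R (lam om h) K z0 r0 c bK lt r00 c0 key).
split => //.
move=> z _ _; rewrite /rho; apply/ereal_inf_pinfty => _ [s [bs [ins [hs _]]] <-].
exact: part1 s bs ins (or_introl hs).
Qed.
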